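(* Let $\ell$ be the $x$-axis. Let $P$ be a set of $n$ points with nonnegative $y$-coordinates and pairwise distinct $x$-coordinates, sorted by $x$-coordinate as $p_1,\dots,p_n$. Let $S$ be a finite set of closed disks all of the same radius, with centers having nonpositive $y$-coordinates, each disk $s$ having weight $w(s)>0$, such that no point of $P$ lies on the boundary of any disk of $S$ and every point of $P$ lies in at least one disk of $S$. For a point $p$ let $S_p\subseteq S$ be the set of disks containing $p$. Define numbers $\delta_1,\dots,\delta_n$ by the following procedure: initially $\mathrm{cost}(s)=w(s)$ for all $s\in S$; then for $i=1,2,\dots,n$ in order, set $\delta_i=\min_{s\in S_{p_i}}\mathrm{cost}(s)$, and afterwards set $\mathrm{cost}(s)=w(s)+\delta_i$ for every disk $s\in S\setminus S_{p_i}$. Then for every $i\in\{1,\dots,n\}$, $\delta_i$ equals the minimum total weight of a subset of $S$ whose union covers $\{p_1,\dots,p_i\}$. In particular $\delta_n$ equals the minimum total weight of a subset of $S$ whose union covers $P$.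
   Context: Disks are closed; the value of $\mathrm{cost}(s)$ used when computing $\delta_i$ is its value at the start of iteration $i$ (i.e., after the updates of iterations $1,\dots,i-1$). *)

(* Defs.v *)
From HB Require Import structures.
From mathcomp Require Import all_boot all_order all_algebra.
Set Implicit Arguments. Unset Strict Implicit. Unset Printing Implicit Defensive.
Import Order.TTheory GRing.Theory Num.Theory.
Local Open Scope ring_scope.

Definition in_disk (R : realFieldType) (r : R) (c q : R * R) : bool :=
  (q.1 - c.1) ^+ 2 + (q.2 - c.2) ^+ 2 <= r ^+ 2.

Definition on_boundary (R : realFieldType) (r : R) (c q : R * R) : bool :=
  (q.1 - c.1) ^+ 2 + (q.2 - c.2) ^+ 2 == r ^+ 2.

(* minimum of f over a finite set A (0 if A is empty; only used on nonempty A) *)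
Definition minf (R : realFieldType) (T : finType) (A : {set T}) (f : T -> R) : R :=
  match [pick t in A] with
  | Some t0 => \big[Num.min/f t0]_(t in A) f t
  | None => 0
  end.

Definition Sp (R : realFieldType) (D : finType) (r : R) (c : D -> R * R)
  (q : R * R) : {set D} := [set s | in_disk r (c s) q].

Fixpoint deltas_from (R : realFieldType) (D : finType) (r : R) (c : D -> R * R)
  (w : D -> R) (cost : D -> R) (ps : seq (R * R)) : seq R :=
  match ps with
  | [::] => [::]
  | q :: ps' =>
      let d := minf (Sp r c q) cost in
      d :: deltas_from r c w (fun s => if s \in Sp r c q then cost s else w s + d) ps'
  end.

(* delta_1, ..., delta_n (0-indexed), starting from cost = w *)
Definition deltas (R : realFieldType) (D : finType) (r : R) (c : D -> R * R)
  (w : D -> R) (P : seq (R * R)) : seq R := deltas_from r c w w P.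

Definition covers (R : realFieldType) (D : finType) (r : R) (c : D -> R * R)
  (T : {set D}) (Q : seq (R * R)) : bool :=
  all (fun q => [exists s in T, in_disk r (c s) q]) Q.

Definition min_cover_weight (R : realFieldType) (D : finType) (r : R)
  (c : D -> R * R) (w : D -> R) (Q : seq (R * R)) : R :=
  minf [set T : {set D} | covers r c T Q] (fun T => \sum_(s in T) w s).

(* Main.v *)
Require Import Defs.
From HB Require Import structures.
From mathcomp Require Import all_boot all_order all_algebra.
From mathcomp Require Import ring lra.
Import Order.TTheory GRing.Theory Num.Theory.
Local Open Scope ring_scope.

Section Geo.
Variable R : realFieldType.

Lemma geoY (ax ay bx by' dx dy sx sy tx ty r : R) :
  ax < bx -> bx < dx -> 0 <= ay -> 0 <= by' -> 0 <= dy -> sy <= 0 ->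
  (ax - sx)^+2 + (ay - sy)^+2 <= r^+2 ->
  (dx - sx)^+2 + (dy - sy)^+2 <= r^+2 ->
  r^+2 < (bx - sx)^+2 + (by' - sy)^+2 ->
  (bx - tx)^+2 + (by' - ty)^+2 <= r^+2 ->
  r^+2 < (ax - tx)^+2 + (ay - ty)^+2 ->
  r^+2 < (dx - tx)^+2 + (dy - ty)^+2 -> 0 < ty - sy.
Proof.
move=> h1 h2 hay hby hdy hsy Has Hds Hbs Hbt Hat Hdt.
set L := dx - ax; set al := dx - bx; set be := bx - ax.
have hL : L = al + be by rewrite /L /al /be; ring.
have hal : 0 < al by rewrite /al; lra.
have hbe : 0 < be by rewrite /be; lra.
set Y := al * ay + be * dy.
have hx : L * bx = al * ax + be * dx by rewrite hL /al /be; ring.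
have conv : (al * ax + be * dx - L * sx)^+2 + (Y - L * sy)^+2 <= L^+2 * r^+2.
  have id : al * L * ((ax - sx)^+2 + (ay - sy)^+2) + be * L * ((dx - sx)^+2 + (dy - sy)^+2)
     - ((al * ax + be * dx - L * sx)^+2 + (Y - L * sy)^+2) = al * be * ((ax - dx)^+2 + (ay - dy)^+2).
    rewrite /Y hL; ring.
  have : 0 <= al * be * ((ax - dx)^+2 + (ay - dy)^+2).
    apply: mulr_ge0; [apply: mulr_ge0; lra | apply: addr_ge0; exact: sqr_ge0].
  have hLp : 0 < L by rewrite hL; lra.
  have : al * L * ((ax - sx)^+2 + (ay - sy)^+2) <= al * L * r^+2.
    by apply: ler_wpM2l => //; apply: mulr_ge0; lra.
  have : be * L * ((dx - sx)^+2 + (dy - sy)^+2) <= be * L * r^+2.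
    by apply: ler_wpM2l => //; apply: mulr_ge0; lra.
  have : L^+2 * r^+2 = al * L * r^+2 + be * L * r^+2 by rewrite hL; ring.
  lra.
have hY : L * by' > Y.
  rewrite ltNge; apply/negP => hle.
  have hLp : 0 < L by rewrite hL; lra.
  have q1 : (L * by' - L * sy)^+2 <= (Y - L * sy)^+2.
    have : 0 <= L * by' - L * sy by nra.
    nra.
  have q2 : (L * bx - L * sx)^+2 = (al * ax + be * dx - L * sx)^+2 by rewrite hx.
  have : L^+2 * ((bx - sx)^+2 + (by' - sy)^+2) <= L^+2 * r^+2.
    have -> : L^+2 * ((bx - sx)^+2 + (by' - sy)^+2) = (L * bx - L * sx)^+2 + (L * by' - L * sy)^+2 by ring.
    lra.
  have hL2 : 0 < L^+2 by nra.
  rewrite ler_pM2l //; lra.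
have key : L * ((bx - sx)^+2 + (by' - sy)^+2 - ((bx - tx)^+2 + (by' - ty)^+2))
   - al * ((ax - sx)^+2 + (ay - sy)^+2 - ((ax - tx)^+2 + (ay - ty)^+2))
   - be * ((dx - sx)^+2 + (dy - sy)^+2 - ((dx - tx)^+2 + (dy - ty)^+2))
   = 2 * (ty - sy) * (L * by' - Y).
  rewrite /Y /L /al /be; ring.
have p1 : 0 < L * ((bx - sx)^+2 + (by' - sy)^+2 - ((bx - tx)^+2 + (by' - ty)^+2)).
  apply: mulr_gt0; [rewrite hL; lra | lra].
have p2 : al * ((ax - sx)^+2 + (ay - sy)^+2 - ((ax - tx)^+2 + (ay - ty)^+2)) < 0.
  rewrite pmulr_rlt0 //; lra.
have p3 : be * ((dx - sx)^+2 + (dy - sy)^+2 - ((dx - tx)^+2 + (dy - ty)^+2)) < 0.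
  rewrite pmulr_rlt0 //; lra.
have : 0 < 2 * (ty - sy) * (L * by' - Y) by lra.
rewrite -mulrA pmulr_rgt0 // pmulr_lgt0 //; lra.
Qed.
Lemma geoL0 (X1 u1 X3 u3 Dx Dy r : R) :
  X1 < X3 -> 0 <= u1 -> 0 <= u3 -> 0 <= Dx -> 0 <= Dy ->
  X1^+2 + u1^+2 <= r^+2 ->
  r^+2 < (X1 + Dx)^+2 + (u1 + Dy)^+2 ->
  (X3 + Dx)^+2 + (u3 + Dy)^+2 <= r^+2 ->
  r^+2 < X3^+2 + u3^+2 -> False.
Proof.
move=> hX hu1 hu3 hDx hDy Hbt Hbs Hds Hdt.
have e1 : 2 * (X3 * Dx + u3 * Dy) + (Dx^+2 + Dy^+2) < 0 by nra.
have e2 : 2 * (X1 * Dx + u1 * Dy) + (Dx^+2 + Dy^+2) > 0 by nra.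
have hu : u3 < u1 by nra.
have hX3 : 0 < X3 by nra.
nra.
Qed.

Lemma geo (r : R) (a b d cs ct : R * R) :
  a.1 < b.1 -> b.1 < d.1 -> 0 <= a.2 -> 0 <= b.2 -> 0 <= d.2 ->
  cs.2 <= 0 -> ct.2 <= 0 ->
  in_disk r cs a -> in_disk r cs d -> ~~ in_disk r cs b -> in_disk r ct b ->
  in_disk r ct a || in_disk r ct d.
Proof.
rewrite /in_disk => h1 h2 ha hb hd hs ht Has Hds Hbs Hbt.
apply/negPn/negP; rewrite negb_or => /andP[Hat Hdt].
rewrite -ltNge in Hbs; rewrite -ltNge in Hat; rewrite -ltNge in Hdt.
have hY := @geoY a.1 a.2 b.1 b.2 d.1 d.2 cs.1 cs.2 ct.1 ct.2 r h1 h2 ha hb hd hs Has Hds Hbs Hbt Hat Hdt.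
case: (lerP 0 (ct.1 - cs.1)) => hDx.
  apply: (@geoL0 (b.1 - ct.1) (b.2 - ct.2) (d.1 - ct.1) (d.2 - ct.2)
     (ct.1 - cs.1) (ct.2 - cs.2) r); lra.
apply: (@geoL0 (ct.1 - b.1) (b.2 - ct.2) (ct.1 - a.1) (a.2 - ct.2)
     (cs.1 - ct.1) (ct.2 - cs.2) r); lra.
Qed.
End Geo.
Lemma minf_le (R : realFieldType) (T : finType) (A : {set T}) (f : T -> R) t :
  t \in A -> minf A f <= f t.
Proof.
rewrite /minf => Ht; case: pickP => [t0 Ht0|h]; last by rewrite h in Ht.
exact: bigmin_le_cond.
Qed.

Lemma minf_ex (R : realFieldType) (T : finType) (A : {set T}) (f : T -> R) t :
  t \in A -> exists2 u, u \in A & minf A f = f u.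
Proof.
rewrite /minf => Ht; case: pickP => [t0 Ht0|h]; last by rewrite h in Ht.
case: (@arg_minP _ _ _ t0 (fun i => i \in A) f Ht0) => u Hu Hmin.
exists u => //; apply/le_anti/andP; split; first exact: bigmin_le_cond.
by apply/bigmin_geP; split => //; first exact: Hmin.
Qed.

Section Main.
Variables (R : realFieldType) (P : seq (R * R)) (D : finType) (c : D -> R * R) (r : R) (w : D -> R).
Hypothesis hy : forall q, q \in P -> 0 <= q.2.
Hypothesis hsort : sorted (fun a b : R * R => a.1 < b.1) P.
Hypothesis hc : forall s, (c s).2 <= 0.
Hypothesis hw : forall s, 0 < w s.
Hypothesis hcov : forall q, q \in P -> exists s, in_disk r (c s) q.

Local Notation p k := (nth (0 : R, 0 : R) P k).

Definition OPT m := min_cover_weight r c w (take m P).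

Definition step (cost : D -> R) (q : R * R) : D -> R :=
  fun s => if s \in Sp r c q then cost s else w s + minf (Sp r c q) cost.

Lemma deltas_from_nth cost ps i : (i < size ps)%N ->
  nth 0 (deltas_from r c w cost ps) i =
  minf (Sp r c (nth (0 : R, 0 : R) ps i)) (foldl step cost (take i ps)).
Proof.
elim: ps cost i => [|q ps IH] cost [|i] //= hi.
by rewrite IH.
Qed.

Definition costk i := foldl step w (take i P).

Fixpoint mm (s : D) (i : nat) : nat :=
  match i with
  | 0 => 0
  | i'.+1 => if s \in Sp r c (p i') then mm s i' else i'.+1
  end.

Lemma SpE s q : (s \in Sp r c q) = in_disk r (c s) q.
Proof. by rewrite /Sp inE. Qed.

Lemma mm_le s i : (mm s i <= i)%N.
Proof. elim: i => //= i IH; case: ifP => // _; exact: leqW. Qed.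

Lemma mm_in s i k : (mm s i <= k)%N -> (k < i)%N -> in_disk r (c s) (p k).
Proof.
elim: i k => // i IH k /=; case: ifP => H.
  move=> hk; rewrite ltnS leq_eqVlt => /orP[/eqP->|hki]; first by rewrite -SpE.
  exact: IH.
by move=> h1 h2; have := leq_trans h1 h2; rewrite ltnn.
Qed.

Lemma mm_out s i : (0 < mm s i)%N -> ~~ in_disk r (c s) (p (mm s i).-1).
Proof.
elim: i => // i IH /=; case: ifP => H //= _.
by rewrite -SpE H.
Qed.

Lemma coversE T m : covers r c T (take m P) <->
  (forall k, (k < minn m (size P))%N -> exists2 s, s \in T & in_disk r (c s) (p k)).
Proof.
rewrite /covers; split.
  move/(all_nthP (0 : R, 0 : R)) => H k hk.
  have := H k; rewrite size_take_min => /(_ hk) /existsP[s /andP[hs hd]].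
  exists s => //; move: hd; rewrite nth_take //.
  by apply: leq_trans hk (geq_minl _ _).
move=> H; apply/(all_nthP (0 : R, 0 : R)) => k; rewrite size_take_min => hk.
have [s hs hd] := H k hk; apply/existsP; exists s; rewrite hs /=.
rewrite nth_take //; by apply: leq_trans hk (geq_minl _ _).
Qed.

Lemma covers_setT m : covers r c setT (take m P).
Proof.
apply/allP => q /mem_take hq; have [s hs] := hcov q hq.
by apply/existsP; exists s; rewrite inE.
Qed.

Lemma OPT_le m C : covers r c C (take m P) -> OPT m <= \sum_(s in C) w s.
Proof. by move=> h; apply: minf_le; rewrite inE. Qed.

Lemma OPT_ex m : exists2 C, covers r c C (take m P) & OPT m = \sum_(s in C) w s.
Proof.
have h : (setT : {set D}) \in [set T : {set D} | covers r c T (take m P)].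
  by rewrite inE covers_setT.
have [C] := @minf_ex _ _ _ (fun T : {set D} => \sum_(s in T) w s) _ h.
by rewrite inE => hC hE; exists C.
Qed.

Lemma OPT0 : OPT 0 = 0.
Proof.
apply/le_anti/andP; split.
  have -> : (0 : R) = \sum_(s in (set0 : {set D})) w s by rewrite big_set0.
  by apply: OPT_le; rewrite take0.
have [C _ ->] := OPT_ex 0.
by apply: sumr_ge0 => s _; apply: ltW.
Qed.


Lemma ltx k j : (k < j)%N -> (j < size P)%N -> (p k).1 < (p j).1.
Proof.
move=> hkj hj.
have tr : transitive (fun a b : R * R => a.1 < b.1).
  by move=> y x z h1 h2; exact: lt_trans h1 h2.
apply: (sorted_ltn_nth tr (0 : R, 0 : R) hsort) => //; rewrite inE //.
exact: ltn_trans hkj hj.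
Qed.

Lemma py k : (k < size P)%N -> 0 <= (p k).2.
Proof. by move=> hk; apply: hy; apply: mem_nth. Qed.

Lemma geo_idx k b j s t : (k < b)%N -> (b < j)%N -> (j < size P)%N ->
  in_disk r (c s) (p k) -> in_disk r (c s) (p j) -> ~~ in_disk r (c s) (p b) ->
  in_disk r (c t) (p b) -> in_disk r (c t) (p k) || in_disk r (c t) (p j).
Proof.
move=> hkb hbj hj.
have hb : (b < size P)%N by exact: ltn_trans hbj hj.
have hk : (k < size P)%N by exact: ltn_trans hkb hb.
apply: geo; [exact: ltx | exact: ltx | exact: py | exact: py | exact: py | exact: hc | exact: hc].
Qed.

Lemma delta_eq i : (i < size P)%N ->
  (forall s, costk i s = w s + OPT (mm s i)) ->
  minf (Sp r c (p i)) (costk i) = OPT i.+1.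
Proof.
move=> hi Hinv.
have [s0 hs0] := hcov (p i) (mem_nth _ hi).
have hs0' : s0 \in Sp r c (p i) by rewrite SpE.
apply/le_anti/andP; split.
-
  have [C hC hE] := OPT_ex i.+1.
  have hpi : (i < minn i.+1 (size P))%N by rewrite leq_min ltnSn hi.
  have [s1 hs1C hs1] := (proj1 (coversE C i.+1) hC) i hpi.
  have Ps1 : (s1 \in C) && in_disk r (c s1) (p i) by rewrite hs1C hs1.
  case: (@arg_minnP D s1 (fun s => (s \in C) && in_disk r (c s) (p i)) (fun s => mm s i) Ps1)
    => s /andP[hsC hsi] Hmin.
  set m := mm s i.
  have hmi : (m <= i)%N := mm_le s i.
  have cov : covers r c (C :\ s) (take m P).
    apply/coversE => k hk.
    have hkm : (k < m)%N by apply: leq_trans hk (geq_minl _ _).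
    have hki : (k < i)%N by exact: leq_trans hkm hmi.
    have hkC : (k < minn i.+1 (size P))%N.
      by rewrite leq_min (ltn_trans hki (ltnSn i)) (ltn_trans hki hi).
    have [t0 ht0C ht0] := (proj1 (coversE C i.+1) hC) k hkC.
    case: (eqVneq t0 s) => [et0|nt0]; last first.
      by exists t0 => //; rewrite !inE nt0.
    move: ht0; rewrite et0 => hsk.
    have m0 : (0 < m)%N by exact: leq_ltn_trans (leq0n k) hkm.
    set b := m.-1.
    have hbm : m = b.+1 by rewrite /b prednK.
    have hsb : ~~ in_disk r (c s) (p b) := mm_out s i m0.
    have hkb : (k < b)%N.
      rewrite ltn_neqAle -ltnS -hbm hkm andbT; apply/eqP => ekb.
      by move: hsb; rewrite -ekb hsk.
    have hbi : (b < i)%N by rewrite -ltnS -hbm ltnS.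
    have hbC : (b < minn i.+1 (size P))%N.
      by rewrite leq_min (ltn_trans hbi (ltnSn i)) (ltn_trans hbi hi).
    have [t htC htb] := (proj1 (coversE C i.+1) hC) b hbC.
    have nts : t != s by apply/eqP => ets; move: hsb; rewrite -ets htb.
    suff htk : in_disk r (c t) (p k) by exists t => //; rewrite !inE nts.
    have := @geo_idx k b i s t hkb hbi hi hsk hsi hsb htb; case/orP => // hti.
    have Hm := Hmin t; rewrite htC hti /= in Hm; have Hm' := Hm isT.
    set m' := mm t i in Hm'.
    have m0' : (0 < m')%N by exact: leq_trans m0 Hm'.
    set j := m'.-1.
    have hjm : m' = j.+1 by rewrite /j prednK.
    have htj : ~~ in_disk r (c t) (p j) := mm_out t i m0'.
    have hbj : (b < j)%N.
      rewrite ltn_neqAle; apply/andP; split.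
        by apply/eqP => ebj; move: htj; rewrite -ebj htb.
      by rewrite -ltnS -hbm -hjm.
    have hji : (j < i)%N by rewrite -ltnS -hjm ltnS; exact: mm_le.
    have hsj : in_disk r (c s) (p j).
      apply: (mm_in s i j) hji; rewrite -/m hbm; exact: hbj.
    have := @geo_idx k b j s t hkb hbj (ltn_trans hji hi) hsk hsj hsb htb.
    by case/orP => // h; rewrite h in htj.
  have hs : s \in Sp r c (p i) by rewrite SpE.
  apply: le_trans (@minf_le _ _ _ (costk i) _ hs) _.
  rewrite Hinv hE (big_setD1 s hsC) /=.
  by rewrite lerD2l; apply: OPT_le.
-
  have [s hs ->] := @minf_ex _ _ _ (costk i) _ hs0'.
  rewrite Hinv.
  set m := mm s i.
  have [C hC ->] := OPT_ex m.
  have cov : covers r c (s |: C) (take i.+1 P).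
    apply/coversE => k hk.
    have hki : (k <= i)%N by move: hk; rewrite leq_min ltnS => /andP[].
    case: (ltnP k m) => hkm.
      have hkm' : (k < minn m (size P))%N.
        by rewrite leq_min hkm (leq_ltn_trans hki hi).
      have [t ht htk] := (proj1 (coversE C m) hC) k hkm'.
      by exists t => //; rewrite !inE ht orbT.
    exists s; first by rewrite !inE eqxx.
    move: hki; rewrite leq_eqVlt => /orP[/eqP->|hki]; first by rewrite -SpE.
    exact: (mm_in s i k) hkm hki.
  apply: le_trans (@OPT_le i.+1 (s |: C) cov) _.
  case: (boolP (s \in C)) => hsC.
    have -> : s |: C = C by apply/setUidPr; rewrite sub1set.
    rewrite lerDr; exact: ltW.
  by rewrite big_setU1.
Qed.

Lemma inv i : (i <= size P)%N -> forall s, costk i s = w s + OPT (mm s i).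
Proof.
elim: i => [_ s|i IH hi s]; first by rewrite /costk take0 /= OPT0 addr0.
have hi' : (i < size P)%N by exact: hi.
have -> : costk i.+1 = step (costk i) (p i).
  by rewrite /costk (take_nth (0 : R, 0 : R) hi') -cats1 foldl_cat.
rewrite /step /=; case: ifP => H.
  by rewrite IH // ltnW.
by rewrite delta_eq // => s'; rewrite IH // ltnW.
Qed.

Lemma final i : (i < size P)%N -> nth 0 (deltas r c w P) i = OPT i.+1.
Proof.
move=> hi; rewrite /deltas deltas_from_nth //.
by apply: delta_eq => //; apply: inv; exact: ltnW.
Qed.
End Main.

Theorem mainTheorem2 (R : realFieldType) (P : seq (R * R))
  (D : finType) (c : D -> R * R) (r : R) (w : D -> R) :
  0 < r ->
  injective c ->
  (forall q, q \in P -> 0 <= q.2) ->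
  sorted (fun a b : R * R => a.1 < b.1) P ->
  (forall s, (c s).2 <= 0) ->
  (forall s, 0 < w s) ->
  (forall q s, q \in P -> ~~ on_boundary r (c s) q) ->
  (forall q, q \in P -> exists s, in_disk r (c s) q) ->
  forall i : nat, (i < size P)%N ->
    nth 0 (deltas r c w P) i = min_cover_weight r c w (take i.+1 P).
Proof.
move=> _ _ hy hs hc hw _ hcov i hi.
exact: (@final R P D c r w hy hs hc hw hcov i hi).
Qed.
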